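(* The SSL scheme $(\mathsf{Setup},\mathsf{Gen},\mathsf{Lessor},\mathsf{Run},\mathsf{Check})$ described in the context satisfies $\varepsilon$-correctness with $\varepsilon=\mathrm{negl}(\lambda)$.
   Context: Correctness: for all $C\in\mathcal{C}_\lambda$ with input length $n$, over $\mathsf{crs}\leftarrow\mathsf{Setup}(1^\lambda)$, $\mathsf{sk}\leftarrow\mathsf{Gen}(\mathsf{crs})$, $\rho_C\leftarrow\mathsf{Lessor}(\mathsf{sk},C)$: $\Pr[\forall x\in\{0,1\}^n: y=C(x)$ where $(\rho',y)\leftarrow\mathsf{Run}(\mathsf{crs},\rho_C,x)]\ge1-\varepsilon$ and $\Pr[\mathsf{Check}(\mathsf{sk},\rho_C)=1]\ge1-\varepsilon$. Ingredients: $\mathcal{C}=\{\mathcal{C}_\lambda\}$ is a class of $\mathcal{S}$-searchable circuits (a PPT $\mathcal{S}$ outputs, on $C$, an $x$ with $C(x)=1$) with distribution $\mathcal{D}_{\mathcal{C}}$; $\mathsf{qIHO}=(\mathsf{Obf},\mathsf{Eval})$ is a perfectly correct q-input-hiding obfuscator for $\mathcal{C}$; $\mathsf{shO}$ is a subspace hiding obfuscator over $\mathbb{Z}_q$ (its obfuscation of a subspace $A$ computes the indicator $\mathbb{1}_A$ on all inputs except with negligible probability); $(\mathsf{CRSGen},\mathcal{P},\mathcal{V})$ is a (sub-exponentially secure) q-simulation-extractable NIZK for NP with perfect completeness. For a subspace $A\subseteq\mathbb{Z}_q^\lambda$, $|A\rangle=|A|^{-1/2}\sum_{a\in A}|a\rangle$,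 $A^\perp$ is its dual, and $\mathsf{FT}$ is the quantum Fourier transform over $\mathbb{Z}_q^\lambda$ (so $\mathsf{FT}|A\rangle=|A^\perp\rangle$). Scheme: $\mathsf{Setup}(1^\lambda)$: output $\mathsf{crs}\leftarrow\mathsf{CRSGen}(1^{\lambda+n})$. $\mathsf{Gen}(\mathsf{crs})$: choose a uniformly random $\lambda/2$-dimensional subspace $A\subset\mathbb{Z}_q^\lambda$; $\mathsf{sk}=A$. $\mathsf{Lessor}(A,C)$: prepare $|A\rangle$; $\widetilde{C}\leftarrow\mathsf{qIHO}.\mathsf{Obf}(C;r_o)$; $\widetilde{g}\leftarrow\mathsf{shO}(A;r_A)$; $\widetilde{g_\perp}\leftarrow\mathsf{shO}(A^\perp;r_{A^\perp})$; $x=\mathcal{S}(C)$; $\pi\leftarrow\mathcal{P}(\mathsf{crs},(\widetilde{g},\widetilde{g_\perp},\widetilde{C}),(A,r_o,r_A,r_{A^\perp},C,x))$ for the NP relation: $\widetilde{g}=\mathsf{shO}(A;r_A)$, $\widetilde{g_\perp}=\mathsf{shO}(A^\perp;r_{A^\perp})$, $\widetilde{C}=\mathsf{qIHO}.\mathsf{Obf}(C;r_o)$, $C(x)=1$; output $(|A\rangle\langle A|,\widetilde{g},\widetilde{g_\perp},\widetilde{C},\pi)$. $\mathsf{Run}(\mathsf{crs},(\rho,\widetilde{g},\widetilde{g_\perp},\widetilde{C},\pi),x)$: measure the classical registers; apply $|v\rangle|y\rangle\mapsto|v\rangle|y\oplus\widetilde{g}(v)\rangle$ to $\rho\otimes|0\rangle\langle0|$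 and measure the last bit, getting $a$; apply $\mathsf{FT}$ to the post-measurement state, apply $|v\rangle|y\rangle\mapsto|v\rangle|y\oplus\widetilde{g_\perp}(v)\rangle$ with a fresh ancilla and measure, getting $b$; apply $\mathsf{FT}$ again to get $\rho''$; compute $c\leftarrow\mathcal{V}(\mathsf{crs},(\widetilde{g},\widetilde{g_\perp},\widetilde{C}),\pi)$; if $a=0$ or $b=0$ or $c=0$ output $\bot$; otherwise output $(\rho'',\widetilde{g},\widetilde{g_\perp},\widetilde{C},\pi)$ and $y=\mathsf{qIHO}.\mathsf{Eval}(\widetilde{C},x)$. $\mathsf{Check}(A,(\rho,\dots))$: measure $\{|A\rangle\langle A|,I-|A\rangle\langle A|\}$ on $\rho$ and output $1$ iff the outcome is $|A\rangle\langle A|$. *)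

(* Defs.v *)
From HB Require Import structures.
From mathcomp Require Import all_boot all_order all_algebra all_field.
Set Implicit Arguments. Unset Strict Implicit. Unset Printing Implicit Defensive.
Import Order.TTheory GRing.Theory Num.Theory.
Local Open Scope ring_scope.

Definition Ex (T : finType) (f : T -> algC) : algC :=
  (#|T|%:R)^-1 * \sum_(t : T) f t.
Definition ExS (T : finType) (S : {set T}) (f : T -> algC) : algC :=
  (#|S|%:R)^-1 * \sum_(t in S) f t.
Definition PrU (T : finType) (E : pred T) : algC := Ex (fun t => (E t)%:R).

Definition coins (k : nat) : finType := (k.-tuple bool)%type.

Definition negligible (f : nat -> algC) : Prop :=
  forall c : nat, exists N : nat, forall lam : nat, (N <= lam)%N ->
    `|f lam| <= ((lam ^ c)%N%:R)^-1.

Definition vec (q lam : nat) : finType := 'rV['F_q]_lam.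
Definition dotv (q lam : nat) (u v : vec q lam) : 'F_q := (u *m v^T) 0 0.
Definition rowspace_set (q lam : nat) (M : 'M['F_q]_lam) : {set vec q lam} :=
  [set v : vec q lam | (v <= M)%MS].
Definition subspaces (q lam d : nat) : {set {set vec q lam}} :=
  [set rowspace_set M | M in [set M : 'M['F_q]_lam | \rank M == d]].
Definition is_subspace (q lam : nat) (A : {set vec q lam}) : bool :=
  [exists M : 'M['F_q]_lam, A == rowspace_set M].
Definition perp (q lam : nat) (A : {set vec q lam}) : {set vec q lam} :=
  [set w : vec q lam | [forall a in A, dotv a w == 0]].

(* a fixed primitive q-th root of unity (for q > 0), used by FT *)
Definition omega (q : nat) : algC := sval (C_prim_root_exists (ltn0Sn q.-1)).
(* operators (density matrices) on the Hilbert space with basis T *)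
Definition op (T : finType) := T -> T -> algC.
Definition ket_set (T : finType) (A : {set T}) (v : T) : algC :=
  if v \in A then (sqrtC (#|A|%:R))^-1 else 0.
Definition ketbra (T : finType) (psi : T -> algC) : op T :=
  fun u v => psi u * (psi v)^*.
Definition FT (q lam : nat) : op (vec q lam) :=
  fun u s => (sqrtC ((q ^ lam)%N%:R))^-1 * omega q ^+ (nat_of_ord (dotv u s)).
Definition conj_by (T : finType) (U : op T) (rho : op T) : op T :=
  fun u v => \sum_(s : T) \sum_(t : T) U u s * rho s t * (U v t)^*.
(* Pi rho Pi for the projector Pi onto span{|v> : g v} (unnormalized
   post-measurement state for outcome 1 when measuring the ancilla after
   |v>|y> -> |v>|y xor g(v)>) *)
Definition proj_by (T : finType) (g : pred T) (rho : op T) : op T :=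
  fun u v => (g u)%:R * rho u v * (g v)%:R.
Definition prob1 (T : finType) (g : pred T) (rho : op T) : algC :=
  \sum_(u : T) (g u)%:R * rho u u.
Definition expect (T : finType) (psi : T -> algC) (rho : op T) : algC :=
  \sum_(u : T) \sum_(v : T) (psi u)^* * rho u v * psi v.

Record SSLPrims := {
  qf : nat -> nat;
  nin : nat -> nat;
  Circ : nat -> Type;
  circ_eval : forall lam, Circ lam -> (nin lam).-tuple bool -> bool;
  s_len : nat -> nat;
  search : forall lam, Circ lam -> coins (s_len lam) -> (nin lam).-tuple bool;
  OProg : nat -> Type;
  o_len : nat -> nat;
  obf : forall lam, Circ lam -> coins (o_len lam) -> OProg lam;
  oeval : forall lam, OProg lam -> (nin lam).-tuple bool -> bool;
  SProg : nat -> Type;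
  sh_len : nat -> nat;
  sho : forall lam, {set vec (qf lam) lam} -> coins (sh_len lam) -> SProg lam;
  sheval : forall lam, SProg lam -> vec (qf lam) lam -> bool;
  CRS : nat -> Type;
  crs_len : nat -> nat;
  crsgen : forall lam, coins (crs_len lam) -> CRS lam;
  NProof : nat -> Type;
  p_len : nat -> nat;
  prove : forall lam, CRS lam -> (SProg lam * SProg lam * OProg lam)%type ->
    ({set vec (qf lam) lam} * coins (o_len lam) * coins (sh_len lam) *
       coins (sh_len lam) * Circ lam * (nin lam).-tuple bool)%type ->
    coins (p_len lam) -> NProof lam;
  verify : forall lam, CRS lam -> (SProg lam * SProg lam * OProg lam)%type ->
    NProof lam -> bool
}.

Section Scheme.
Variable P : SSLPrims.

Definition V (lam : nat) : finType := vec (qf P lam) lam.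
Definition Stmt (lam : nat) : Type := (SProg P lam * SProg P lam * OProg P lam)%type.
Definition Wit (lam : nat) : Type :=
  ({set V lam} * coins (o_len P lam) * coins (sh_len P lam) *
   coins (sh_len P lam) * Circ P lam * (nin P lam).-tuple bool)%type.

Definition ssl_rel (lam : nat) (st : Stmt lam) (w : Wit lam) : Prop :=
  let: (A, ro, rA, rAp, C, x) := w in
  st = (sho A rA, sho (perp A) rAp, obf C ro) /\ circ_eval C x = true.

Definition prims_ok : Prop :=
  (* q prime, so that Z_q = 'F_q is a field *)
  (forall lam, prime (qf P lam)) /\
  (forall lam (C : Circ P lam) r, circ_eval C (search C r) = true) /\
  (forall lam (C : Circ P lam) r x, oeval (obf C r) x = circ_eval C x) /\
  (exists nu : nat -> algC, negligible nu /\
     forall lam (A : {set V lam}), is_subspace A ->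
       PrU (fun r : coins (sh_len P lam) =>
              [exists v : V lam, sheval (sho A r) v != (v \in A)]) <= nu lam) /\
  (forall lam (rc : coins (crs_len P lam)) (st : Stmt lam) (w : Wit lam),
     ssl_rel st w -> forall rp : coins (p_len P lam),
       verify (crsgen rc) st (prove (crsgen rc) st w rp) = true).

(* ----- Run: probability that Run(crs, lease, x) outputs y = C(x) -----
   Run measures a (oracle g~), applies FT, measures b (oracle g~perp); it
   outputs bot unless a = b = c = 1, in which case y = Eval(C~, x). *)
Definition run_ok_prob (lam : nat) (crs : CRS P lam) (rho : op (V lam))
  (gt gpt : SProg P lam) (Ct : OProg P lam) (pi : NProof P lam)
  (y_expected : bool) (x : (nin P lam).-tuple bool) : algC :=
  let g := sheval gt in
  let gp := sheval gpt in
  let pab := prob1 gp (conj_by (@FT (qf P lam) lam) (proj_by g rho)) in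
  let c := verify crs (gt, gpt, Ct) pi in
  pab * (c && (oeval Ct x == y_expected))%:R.

(* Pr over Setup, Gen, Lessor (all coins uniform, A uniform among
   lam/2-dimensional subspaces) and over the quantum measurements of
   independent executions of Run (one per input x) that Run outputs C(x)
   for every x *)
Definition ssl_run_correct_prob (lam : nat) (C : Circ P lam) : algC :=
  Ex (fun rc : coins (crs_len P lam) =>
  let crs := crsgen rc in
  ExS (subspaces (qf P lam) lam lam./2) (fun A : {set V lam} =>
  Ex (fun ro : coins (o_len P lam) =>
  Ex (fun rA : coins (sh_len P lam) =>
  Ex (fun rAp : coins (sh_len P lam) =>
  Ex (fun rs : coins (s_len P lam) =>
  Ex (fun rp : coins (p_len P lam) =>
    let Ct := obf C ro in
    let gt := sho A rA in
    let gpt := sho (perp A) rAp in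
    let x0 := search C rs in
    let pi := prove crs (gt, gpt, Ct) (A, ro, rA, rAp, C, x0) rp in
    let rho := ketbra (ket_set A) in
    \prod_(x : (nin P lam).-tuple bool)
       run_ok_prob crs rho gt gpt Ct pi (circ_eval C x) x))))))).

Definition ssl_check_prob (lam : nat) (C : Circ P lam) : algC :=
  Ex (fun rc : coins (crs_len P lam) =>
  ExS (subspaces (qf P lam) lam lam./2) (fun A : {set V lam} =>
    expect (ket_set A) (ketbra (ket_set A)))).

Definition ssl_correct (eps : nat -> algC) : Prop :=
  forall lam (C : Circ P lam),
    1 - eps lam <= ssl_run_correct_prob C /\ 1 - eps lam <= ssl_check_prob C.

End Scheme.

(* Main.v *)
Require Import Defs.
From HB Require Import structures.
From mathcomp Require Import all_boot all_order all_algebra all_field.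
From mathcomp Require Import ring.
Import Order.TTheory GRing.Theory Num.Theory.
Local Open Scope ring_scope.

Lemma prob1_formula (T : finType) (U : op T) (g gp : pred T) (psi : T -> algC) :
  prob1 gp (conj_by U (proj_by g (ketbra psi))) =
  \sum_u (gp u)%:R * ((\sum_s U u s * ((g s)%:R * psi s)) *
                      (\sum_s U u s * ((g s)%:R * psi s))^*).
Proof.
rewrite /prob1; apply: eq_bigr => u _; congr (_ * _).
rewrite /conj_by /proj_by /ketbra rmorph_sum mulr_suml; apply: eq_bigr => s _.
rewrite mulr_sumr; apply: eq_bigr => t _.
rewrite !rmorphM /= !conjC_nat; ring.
Qed.

Lemma prob1_ge0 (T : finType) (U : op T) (g gp : pred T) (psi : T -> algC) :
  0 <= prob1 gp (conj_by U (proj_by g (ketbra psi))).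
Proof.
rewrite prob1_formula; apply: sumr_ge0 => u _.
by rewrite mulr_ge0 ?ler0n ?mul_conjC_ge0.
Qed.

Lemma Ex_ge (T : finType) (f : T -> algC) c :
  (0 < #|T|)%N -> (forall t, c <= f t) -> c <= Ex f.
Proof.
move=> hT hf; rewrite /Ex.
have hn : 0 < (#|T|%:R : algC) by rewrite ltr0n.
rewrite -(ler_pM2l hn) mulrA mulfV ?gt_eqF // mul1r.
rewrite mulr_natl -sumr_const; apply: ler_sum => t _; exact: hf.
Qed.

Lemma ExS_ge (T : finType) (S : {set T}) (f : T -> algC) c :
  (0 < #|S|)%N -> (forall t, t \in S -> c <= f t) -> c <= ExS S f.
Proof.
move=> hT hf; rewrite /ExS.
have hn : 0 < (#|S|%:R : algC) by rewrite ltr0n.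
rewrite -(ler_pM2l hn) mulrA mulfV ?gt_eqF // mul1r.
rewrite mulr_natl -sumr_const; apply: ler_sum => t ht; exact: hf.
Qed.

Lemma Ex_le (T : finType) (f g : T -> algC) :
  (forall t, f t <= g t) -> Ex f <= Ex g.
Proof.
move=> h; rewrite /Ex ler_wpM2l ?invr_ge0 ?ler0n //.
by apply: ler_sum => t _.
Qed.

Lemma Ex_sub (T : finType) (g : T -> algC) c :
  (0 < #|T|)%N -> Ex (fun t => c - g t) = c - Ex g.
Proof.
move=> hT; rewrite /Ex sumrB sumr_const mulrBr -[c *+ _]mulr_natl mulrA mulVf ?mul1r //.
by rewrite pnatr_eq0 -lt0n.
Qed.

Lemma coins_gt0 k : (0 < #|coins k|)%N.
Proof. by apply/card_gt0P; exists [tuple of nseq k false]. Qed.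

Lemma card_rowspace q lam (M : 'M['F_q]_lam) : prime q ->
  #|rowspace_set M| = (q ^ \rank M)%N.
Proof.
move=> pq.
rewrite (_ : (q ^ \rank M)%N = (#|{:'F_q}| ^ (1 * \rank M))%N); last first.
  by rewrite card_Fp // mul1n.
rewrite -card_mx.
have injA: injective (mulmxr (row_base M)).
  have /row_freeP[A' A'K] := row_base_free M.
  by move=> ?; apply: can_inj (mulmxr A') _ => u; rewrite /= -mulmxA A'K mulmx1.
rewrite -(card_image (injA _)); apply: eq_card => v.
by rewrite inE -(eq_row_base M) (sameP submxP codomP).
Qed.

Lemma dotvC q lam (u v : vec q lam) : dotv u v = dotv v u.
Proof. by rewrite /dotv -{1}[u]trmxK -trmx_mul mxE. Qed.

Lemma perp_rowspace q lam (M : 'M['F_q]_lam) :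
  perp (rowspace_set M) = rowspace_set (kermx M^T).
Proof.
apply/setP => w; rewrite !inE sub_kermx.
apply/forallP/eqP => [h | h a].
  apply/matrixP => i j; rewrite ord1 [RHS]mxE.
  have := h (row j M); rewrite inE row_sub /= /dotv => /eqP <-.
  rewrite !mxE; apply: eq_bigr => k _; rewrite !mxE mulrC.
  done.
apply/implyP; rewrite inE => /submxP [x ->].
rewrite /dotv -mulmxA -[M]trmxK -trmx_mul h trmx0 mulmx0 mxE.
done.
Qed.

Lemma card_perp q lam (M : 'M['F_q]_lam) : prime q ->
  (#|rowspace_set M| * #|perp (rowspace_set M)|)%N = (q ^ lam)%N.
Proof.
move=> pq; rewrite perp_rowspace !card_rowspace // mxrank_ker mxrank_tr.
by rewrite -expnD subnKC // rank_leq_row.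
Qed.

Lemma amp_sq (a N : algC) : 0 < a -> 0 < N ->
  let c := (sqrtC N)^-1 * (a * (sqrtC a)^-1) in c * c^* = a / N.
Proof.
move=> ha hN c.
have c0 : 0 <= c by rewrite /c !mulr_ge0 ?invr_ge0 ?sqrtC_ge0 ?ltW.
rewrite geC0_conj // -expr2 /c !exprMn !exprVn !sqrtCK.
have : a != 0 by rewrite gt_eqF.
have : N != 0 by rewrite gt_eqF.
move=> hN0 ha0; field.
by rewrite hN0 ha0.
Qed.

Lemma prob1_good q lam (M : 'M['F_q]_lam) (g gp : pred (vec q lam)) : prime q ->
  (forall v, g v = (v \in rowspace_set M)) ->
  (forall v, gp v = (v \in perp (rowspace_set M))) ->
  prob1 gp (conj_by (@FT q lam) (proj_by g (ketbra (ket_set (rowspace_set M))))) = 1.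
Proof.
move=> pq hg hgp; set A := rowspace_set M.
rewrite prob1_formula.
set a : algC := #|A|%:R.
set N : algC := (q ^ lam)%N%:R.
have a0 : 0 < a.
  rewrite ltr0n; apply/card_gt0P; exists 0; by rewrite inE sub0mx.
have N0 : 0 < N by rewrite ltr0n expn_gt0 prime_gt0.
have amp : forall u, u \in perp A ->
  \sum_s FT u s * ((g s)%:R * ket_set A s) = (sqrtC N)^-1 * (a * (sqrtC a)^-1).
  move=> u hu.
  rewrite (bigID (mem A)) /= [X in _ + X]big1 ?addr0; last first.
    by move=> s /negbTE hs; rewrite hg hs mul0r mulr0.
  rewrite (eq_bigr (fun _ => (sqrtC N)^-1 * (sqrtC a)^-1)); last first.
    move=> s hs; rewrite hg hs /ket_set hs mul1r /FT.
    have -> : dotv u s = 0.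
      move: hu; rewrite inE => /forallP /(_ s); rewrite hs /= dotvC => /eqP //.
    by rewrite expr0 mulr1.
  rewrite sumr_const /a -mulr_natl; ring.
rewrite (bigID gp) /= [X in _ + X]big1 ?addr0; last first.
  by move=> u /negbTE hu; rewrite hu mul0r.
rewrite (eq_bigl (mem (perp A))) => [|u]; last by rewrite hgp.
rewrite (eq_bigr (fun _ => a / N)); last first.
  move=> u hu; have hu' : u \in perp A := hu.
  by rewrite hgp hu' mul1r amp // amp_sq.
rewrite sumr_const -mulr_natl mulrA.
have hc := @card_perp q lam M pq.
rewrite /a -natrM mulnC -/A hc mulfV // gt_eqF //.
Qed.

Lemma expect_ket q lam (M : 'M['F_q]_lam) :
  expect (ket_set (rowspace_set M)) (ketbra (ket_set (rowspace_set M))) = 1.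
Proof.
set A := rowspace_set M.
set a : algC := #|A|%:R.
have a0 : 0 < a.
  rewrite ltr0n; apply/card_gt0P; exists 0; by rewrite inE sub0mx.
have k0 : 0 <= (sqrtC a)^-1 by rewrite invr_ge0 sqrtC_ge0 ltW.
have hs : \sum_u (ket_set A u)^* * ket_set A u = 1.
  rewrite (bigID (mem A)) /= [X in _ + X]big1 ?addr0; last first.
    by move=> s /negbTE hs; rewrite /ket_set hs mulr0.
  rewrite (eq_bigr (fun _ => a^-1)); last first.
    move=> s hs; rewrite /ket_set hs geC0_conj // -expr2 exprVn sqrtCK //.
  by rewrite sumr_const -mulr_natr mulVf // gt_eqF.
have -> : (1:algC) = (\sum_u (ket_set A u)^* * ket_set A u) * (\sum_u (ket_set A u)^* * ket_set A u) by rewrite hs mulr1.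
rewrite /expect /ketbra mulr_suml; apply: eq_bigr => u _.
rewrite mulr_sumr; apply: eq_bigr => v _.
ring.
Qed.

Lemma eq_Ex (T : finType) (f g : T -> algC) : (forall t, f t = g t) -> Ex f = Ex g.
Proof. by move=> h; rewrite /Ex; congr (_ * _); apply: eq_bigr => t _. Qed.

Lemma subspaces_gt0 q lam : (0 < #|subspaces q lam lam./2|)%N.
Proof.
apply/card_gt0P; exists (rowspace_set (pid_mx lam./2 : 'M['F_q]_lam)).
apply/imsetP; exists (pid_mx lam./2) => //.
have hh : (lam./2 <= lam)%N by rewrite leq_half_double -addnn -addnS leq_addr.
by rewrite inE rank_pid_mx // hh.
Qed.

Lemma negl2 (nu : nat -> algC) : negligible nu -> negligible (fun l => `|nu l| *+ 2).
Proof.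
move=> hn c; case: (hn c.+1) => N hN; exists (maxn N 2) => l hl.
have hN' := hN l (leq_trans (leq_maxl _ _) hl).
have l2 : (2 <= l)%N := leq_trans (leq_maxr _ _) hl.
have l0 : 0 < (l%:R : algC) by rewrite ltr0n; case: l l2 {hl hN'}.
rewrite normrMn normr_id.
apply: (@le_trans _ _ (((l ^ c.+1)%N%:R)^-1 *+ 2)); first by rewrite lerMn2r hN' orbT.
rewrite expnSr natrM invfM -mulrnAr; apply: ler_piMr; first by rewrite invr_ge0 ler0n.
by rewrite -mulr_natr mulrC ler_pdivrMr // mul1r ler_nat.
Qed.

Theorem lemma54 (P : SSLPrims) :
  prims_ok P -> exists eps : nat -> algC, negligible eps /\ ssl_correct P eps.
Proof.
move=> [hprime [hsearch [hobf [[nu [negnu hnu]] hcomp]]]].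
exists (fun lam => `|nu lam| *+ 2); split; first exact: negl2.
move=> lam C.
have eps0 : 0 <= `|nu lam| *+ 2 by rewrite mulrn_wge0.
split; last first.
  rewrite /ssl_check_prob; apply: Ex_ge => [|rc]; first exact: coins_gt0.
  apply: ExS_ge => [|A]; first exact: subspaces_gt0.
  case/imsetP => M _ ->; rewrite expect_ket.
  by rewrite lerBlDr lerDl.
rewrite /ssl_run_correct_prob; apply: Ex_ge => [|rc]; first exact: coins_gt0.
apply: ExS_ge => [|A0]; first exact: subspaces_gt0.
case/imsetP => M _ ->.
apply: Ex_ge => [|ro]; first exact: coins_gt0.
set A := rowspace_set M.
set bA := fun rA : coins (sh_len P lam) =>
  [exists v : V P lam, sheval (sho A rA) v != (v \in A)].
set bP := fun rAp : coins (sh_len P lam) =>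
  [exists v : V P lam, sheval (sho (perp A) rAp) v != (v \in perp A)].
have hA : PrU bA <= `|nu lam|.
  have h : PrU bA <= nu lam.
    apply: hnu; apply/existsP; exists M; done.
  have h0 : 0 <= PrU bA by apply: Ex_ge => [|t]; [exact: coins_gt0| exact: ler0n].
  by rewrite ger0_norm // (le_trans h0 h).
have hP : PrU bP <= `|nu lam|.
  have h : PrU bP <= nu lam.
    apply: hnu; apply/existsP; exists (kermx M^T); by rewrite /A perp_rowspace.
  have h0 : 0 <= PrU bP by apply: Ex_ge => [|t]; [exact: coins_gt0| exact: ler0n].
  by rewrite ger0_norm // (le_trans h0 h).
apply: (@le_trans _ _ (Ex (fun rA => Ex (fun rAp => 1 - (bA rA)%:R - (bP rAp)%:R)))).
  have e1 : forall rA, Ex (fun rAp => 1 - (bA rA)%:R - (bP rAp)%:R)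
                     = (1 - PrU bP) - (bA rA)%:R.
    move=> rA; rewrite Ex_sub; last exact: coins_gt0.
    rewrite /PrU; ring.
  rewrite (@eq_Ex _ _ _ e1) Ex_sub; last exact: coins_gt0.
  rewrite -/(PrU bA) -addrA lerD2l -opprD lerN2 mulr2n.
  exact: lerD.
apply: Ex_le => rA; apply: Ex_le => rAp.
apply: Ex_ge => [|rs]; first exact: coins_gt0.
apply: Ex_ge => [|rp]; first exact: coins_gt0.
rewrite /=.
set F := \prod_x _.
have F0 : 0 <= F.
  apply: prodr_ge0 => x _; rewrite /run_ok_prob.
  by rewrite mulr_ge0 ?ler0n ?prob1_ge0.
case hbA : (bA rA).
  apply: le_trans F0; rewrite [true%:R]/= subrr sub0r oppr_le0 ler0n //.
case hbP : (bP rAp).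
  apply: le_trans F0; rewrite [false%:R]/= [true%:R]/= subr0 subrr //.
suff -> : F = 1 by rewrite [false%:R]/= !subr0.
rewrite /F; apply: big1 => x _.
rewrite /run_ok_prob /= hobf eqxx hcomp ?andbT ?mulr1; last first.
  by rewrite /ssl_rel; split => //; apply: hsearch.
apply: prob1_good => //.
  move=> v; move/negbT: hbA; rewrite negb_exists => /forallP /(_ v).
  by rewrite negbK => /eqP.
move=> v; move/negbT: hbP; rewrite negb_exists => /forallP /(_ v).
by rewrite negbK => /eqP.
Qed.
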